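(* Let $I$ be a proper tropical ideal in $\overline{\mathbb R}[x_1^{\pm1},\dots,x_n^{\pm1}]$ or in $\overline{\mathbb R}[x_1,\dots,x_n]$. For any $a\in\mathbb R$, $\dim(I|_{x_n=a})\le\dim(I)-1$, where $I|_{x_n=a}=\{f|_{x_n=a}:f\in I\}$.
   Context: $\overline{\mathbb R}=(\mathbb R\cup\{\infty\},\min,+)$; $f|_{x_n=a}$ is the substitution $x_n=a$. Tropical ideal: for $f,g\in I$ and monomial $\mathbf x^{\mathbf u}$ with equal coefficients $[f]_{\mathbf x^{\mathbf u}}=[g]_{\mathbf x^{\mathbf u}}\ne\infty$ there is $h\in I$ with $[h]_{\mathbf x^{\mathbf u}}=\infty$ and $[h]_{\mathbf x^{\mathbf v}}\ge\min([f]_{\mathbf x^{\mathbf v}},[g]_{\mathbf x^{\mathbf v}})$ for all $\mathbf v$, with equality when $[f]_{\mathbf x^{\mathbf v}}\ne[g]_{\mathbf x^{\mathbf v}}$. Dimension: for homogeneous tropical $J\subseteq\overline{\mathbb R}[x_0,\dots,x_n]$, $H_J(e)$ is the maximum size of a set of degree-$e$ monomials containing the support of no element $\ne\infty$ of $J$; it agrees with a polynomial for $e\gg0$ and $\dim J$ is the degree of that polynomial. For $I\subseteq\overline{\mathbb R}[x_1,\dots,x_n]$, $\dim I=\dim I^h$, with $I^h$ generated by the homogenizations $\bigoplus c_{\mathbf u}x_0^{D-|\mathbf u|}\mathbf x^{\mathbf u}$ ($D=\max\{|\mathbf u|:c_{\mathbf u}\ne\infty\}$) of elements of $I$; for Laurent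 $I$, $\dim I=\dim(I\cap\overline{\mathbb R}[x_1,\dots,x_n])$. Proper means $I$ is not the whole semiring. *)

(* Defs.v *)
From HB Require Import structures.
From mathcomp Require Import all_boot all_order all_algebra.
From mathcomp Require Import reals.
Set Implicit Arguments. Unset Strict Implicit. Unset Printing Implicit Defensive.
Import Order.TTheory GRing.Theory Num.Theory.
Local Open Scope ring_scope.

(* An element of Rbar is an [option R]; [None] stands for oo.              *)
Definition trop (R : realType) := option R.

Definition tle (R : realType) (x y : trop R) : Prop :=
  match x, y with
  | _, None => True
  | None, Some _ => False
  | Some a, Some b => a <= b
  end.

Definition tmin (R : realType) (x y : trop R) : trop R :=
  match x, y with
  | None, _ => y
  | _, None => x
  | Some a, Some b => Some (Num.min a b)
  end.

Definition tmul (R : realType) (x y : trop R) : trop R :=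
  match x, y with
  | Some a, Some b => Some (a + b)
  | _, _ => None
  end.

(* [x] is the (tropical) minimum of the family of values [P]; for a family
   with finitely many finite values this determines x uniquely. *)
Definition is_tinf (R : realType) (P : trop R -> Prop) (x : trop R) : Prop :=
  (forall y, P y -> tle x y) /\ (x = None \/ P x).

(* Exponent vectors in n variables x_1..x_n (indexed by 'I_n), with
   exponents in E = nat (polynomials) or E = int (Laurent polynomials). *)
Definition mon (E : nmodType) (n : nat) := {ffun 'I_n -> E}.

Definition madd (E : nmodType) n (u v : mon E n) : mon E n :=
  [ffun i => u i + v i].

(* A tropical (Laurent) polynomial is a finitely supported coefficient
   function; [f u = None] means the coefficient of x^u is oo. *)
Definition tpolyfun (R : realType) (E : nmodType) n := mon E n -> trop R.

Definition finsupp (R : realType) (E : nmodType) n (f : tpolyfun R E n) : Prop :=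
  exists s : seq (mon E n), forall u, f u <> None -> u \in s.

Definition pset (R : realType) (E : nmodType) n := tpolyfun R E n -> Prop.

Definition tinfty (R : realType) (E : nmodType) n : tpolyfun R E n :=
  fun _ => None.

Definition tadd (R : realType) (E : nmodType) n (f g : tpolyfun R E n)
  : tpolyfun R E n := fun u => tmin (f u) (g u).

Definition is_prod (R : realType) (E : nmodType) n (f g h : tpolyfun R E n) : Prop :=
  forall w, is_tinf (fun y => exists u v, madd u v = w /\ y = tmul (f u) (g v)) (h w).

Definition is_ideal (R : realType) (E : nmodType) n (J : pset R E n) : Prop :=
  [/\ (forall f, J f -> finsupp f),
      J (@tinfty R E n),
      (forall f g, J f -> J g -> J (tadd f g)) &
      (forall g f h, finsupp g -> J f -> is_prod g f h -> J h)].

(* tropical ideal: ideal satisfying the monomial elimination axiom *)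
Definition tropical_ideal (R : realType) (E : nmodType) n (I : pset R E n) : Prop :=
  is_ideal I /\
  forall f g u, I f -> I g -> f u = g u -> f u <> None ->
    exists h, [/\ I h, h u = None &
      forall v, tle (tmin (f v) (g v)) (h v) /\
                (f v <> g v -> h v = tmin (f v) (g v))].

Definition tproper (R : realType) (E : nmodType) n (I : pset R E n) : Prop :=
  exists f, finsupp f /\ ~ I f.

Definition gen_ideal (R : realType) (E : nmodType) n (S : pset R E n) : pset R E n :=
  fun g => forall J : pset R E n, is_ideal J -> (forall s, S s -> J s) -> J g.

Definition mdeg n (u : mon nat n) : nat := (\sum_i (u i : nat))%N.

Definition indep (R : realType) n (J : pset R nat n) (S : seq (mon nat n)) : Prop :=
  forall f, J f -> (exists u, f u <> None) -> ~ (forall u, f u <> None -> u \in S).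

Definition hilb_fun (R : realType) n (J : pset R nat n) (e m : nat) : Prop :=
  (exists S : seq (mon nat n),
     [/\ uniq S, size S = m, (forall u, u \in S -> mdeg u = e) & indep J S]) /\
  (forall S : seq (mon nat n), uniq S -> (forall u, u \in S -> mdeg u = e) ->
     indep J S -> (size S <= m)%N).

(* dim J = d for a homogeneous J in Rbar[x_0,...,x_k]: H_J agrees with a
   polynomial P for e >> 0 and d = deg P (deg 0 = -1 by convention). *)
Definition dim_hom (R : realType) n (J : pset R nat n) (d : int) : Prop :=
  exists P : {poly rat},
    (exists e0 : nat, forall e : nat, (e0 <= e)%N ->
       exists m : nat, hilb_fun J e m /\ P.[e%:R] = m%:R) /\
    d = (size P)%:Z - 1.

(* homogenization: variables x_0, x_1..x_k of Rbar[x_0..x_k] are indexed by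
   'I_k.+1, x_0 being ord0 and x_i being lift ord0 (i-1). *)
Definition mtail k (w : mon nat k.+1) : mon nat k := [ffun i => w (lift ord0 i)].

Definition is_homogenization (R : realType) k (f : tpolyfun R nat k)
    (fh : tpolyfun R nat k.+1) : Prop :=
  exists D : nat,
    [/\ (forall u, f u <> None -> (mdeg u <= D)%N),
        (forall u, f u = None) \/ (exists u, f u <> None /\ mdeg u = D) &
        forall w, fh w = if mdeg w == D then f (mtail w) else None].

Definition hom_ideal (R : realType) k (I : pset R nat k) : pset R nat k.+1 :=
  gen_ideal (fun fh => exists f, I f /\ is_homogenization f fh).

Definition dim_poly (R : realType) k (I : pset R nat k) (d : int) : Prop :=
  dim_hom (hom_ideal I) d.

Definition laurent_of (R : realType) k (f : tpolyfun R nat k) : tpolyfun R int k :=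
  fun u => if [forall i, 0 <= u i] then f [ffun i => `|u i|%N] else None.

(* dimension of an ideal in Rbar[x_1^{+-1}..x_k^{+-1}]: dim (I cap Rbar[x]) *)
Definition dim_laurent (R : realType) k (I : pset R int k) (d : int) : Prop :=
  dim_poly (fun f => finsupp f /\ I (laurent_of f)) d.

(* For n+1 variables, the last one (ord_max) is substituted. *)
Definition mextend (E : nmodType) n (u : mon E n) (k : E) : mon E n.+1 :=
  [ffun i => if unlift ord_max i is Some j then u j else k].

(* g = f|_{x_last = a}: g_u = min_k (f_{(u,k)} + k*a); toR casts exponents *)
Definition is_subst (R : realType) (E : nmodType) (toR : E -> R) (a : R) n
    (f : tpolyfun R E n.+1) (g : tpolyfun R E n) : Prop :=
  forall u, is_tinf (fun y => exists k, y = tmul (f (mextend u k)) (Some (toR k * a))) (g u).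

Definition subst_set (R : realType) (E : nmodType) (toR : E -> R) (a : R) n
    (I : pset R E n.+1) : pset R E n :=
  fun g => exists f, I f /\ is_subst toR a f g.

(* Main.v *)
Require Import Defs.
From HB Require Import structures.
From mathcomp Require Import all_boot all_order all_algebra.
From mathcomp Require Import reals.
From mathcomp Require Import ring lra zify.
From Stdlib Require Import Classical FunctionalExtensionality IndefiniteDescription.
Import Order.TTheory GRing.Theory Num.Theory.
Local Open Scope ring_scope.

Module Aux.
Set Implicit Arguments. Unset Strict Implicit. Unset Printing Implicit Defensive.


Section Trop.
Variable R : realType.
Implicit Types x y z : trop R.

Lemma tle_refl x : tle x x.
Proof. by case: x => //= a. Qed.

Lemma tle_trans x y z : tle x y -> tle y z -> tle x z.
Proof. by case: x; case: y; case: z => //= a b c; apply: le_trans. Qed.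

Lemma tle_total x y : tle x y \/ tle y x.
Proof. case: x; case: y => //=; try by [left|right]. move=> a b.
by case/orP: (le_total a b) => ->; [right|left]. Qed.

Lemma tle_anti x y : tle x y -> tle y x -> x = y.
Proof. case: x; case: y => //= a b h1 h2. by congr Some; apply/eqP; rewrite eq_le h1 h2. Qed.

Lemma tleN y : tle None y -> y = None.
Proof. by case: y. Qed.

Lemma tmin_le_l x y : tle (tmin x y) x.
Proof. case: x; case: y => //= *; rewrite ?ge_min ?lexx ?orbT //; exact: tle_refl. Qed.

Lemma tmin_le_r x y : tle (tmin x y) y.
Proof. case: x; case: y => //= *; rewrite ?ge_min ?lexx ?orbT //; exact: tle_refl. Qed.

Lemma tmin_glb x y z : tle z x -> tle z y -> tle z (tmin x y).
Proof. case: x; case: y; case: z => //= *; by rewrite le_min; apply/andP. Qed.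

Lemma tmin_cases x y : tmin x y = x \/ tmin x y = y.
Proof. case: x; case: y => /=; try by [left|right]. move=> a b.
case/orP: (le_total a b) => h; [right|left]; congr Some.
  by rewrite min_r. by rewrite min_l. Qed.

Lemma tmul_mono c x y : tle x y -> tle (tmul c x) (tmul c y).
Proof. case: c; case: x; case: y => //= *; by rewrite lerD2l. Qed.

Lemma tmulC x y : tmul x y = tmul y x.
Proof. by case: x; case: y => //= *; rewrite addrC. Qed.

Lemma tmul_mono2 x y x' y' : tle x y -> tle x' y' -> tle (tmul x x') (tmul y y').
Proof. move=> h1 h2. apply: (tle_trans (tmul_mono x h2)).
rewrite (tmulC x y') (tmulC y y'). exact: tmul_mono. Qed.

Lemma tmul_None x y : tmul x y <> None -> x <> None /\ y <> None.
Proof. by case: x; case: y. Qed.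

Lemma tmulS0 x : tmul (Some 0) x = x.
Proof. by case: x => //= r; rewrite add0r. Qed.

Lemma tinf_single (P : trop R -> Prop) x :
  (forall y, P y -> y = None \/ y = x) -> (x = None \/ P x) -> is_tinf P x.
Proof.
move=> h1 h2; split=> // y /h1 [e|e]; subst y; [by case: x {h1 h2}| exact: tle_refl].
Qed.

Lemma tinf_None (P : trop R -> Prop) x y : is_tinf P x -> x = None -> P y -> y = None.
Proof. by move=> [h _] e Py; move: (h y Py); rewrite e => /tleN. Qed.

Lemma tinf_nN (P : trop R -> Prop) x y : is_tinf P x -> P y -> y <> None -> x <> None.
Proof. by move=> h Py yN xN; apply: yN; apply: (tinf_None h xN Py). Qed.

Lemma tinf_wit (P : trop R -> Prop) x : is_tinf P x -> x <> None -> P x.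
Proof. by move=> [_ [//|//]]. Qed.

Lemma tinf_uniq (P : trop R -> Prop) x y : is_tinf P x -> is_tinf P y -> x = y.
Proof.
move=> [hx hx2] [hy hy2]; apply: tle_anti.
  by case: hy2 => [->|/hx]; [case: x {hx hx2}|].
by case: hx2 => [->|/hy]; [case: y {hy hy2}|].
Qed.

Lemma tinf_ex (P : trop R -> Prop) (s : seq (trop R)) :
  (forall y, P y -> y <> None -> y \in s) -> exists x, is_tinf P x.
Proof.
elim: s P => [|a s IH] P hs.
  exists None; split; last by left.
  move=> y Py; case: y Py => // r Pr.
  by have := hs _ Pr; rewrite in_nil; move=> /(_ ltac:(discriminate)).
have hs' : forall y, (P y /\ y <> a) -> y <> None -> y \in s.
  move=> y [Py ya] yN; have := hs y Py yN; rewrite inE => /orP [/eqP //|//].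
have [x [hx1 hx2]] := IH (fun y => P y /\ y <> a) hs'.
case: (classic (P a /\ a <> None)) => [[Pa aN]|nPa].
- exists (tmin a x); split.
  + move=> y Py; case: (classic (y = a)) => [->|ya]; first exact: tmin_le_l.
    exact: (tle_trans (tmin_le_r _ _) (hx1 y (conj Py ya))).
  + right. case: hx2 => [x0|[Px _]].
      by rewrite x0; case: (a) Pa.
    by case: (tmin_cases a x) => ->.
- exists x; split.
  + move=> y Py; case: (classic (y = a)) => [ya|ya]; last exact: hx1.
    case: (classic (y = None)) => [->|yN]; first by case: x {hx1 hx2}.
    by exfalso; apply: nPa; rewrite -ya.
  + by case: hx2 => [->|[]]; [left|right].
Qed.

Lemma tinf_ext (P Q : trop R -> Prop) x :
  is_tinf P x -> (forall y, Q y -> y = None \/ P y) -> (forall y, P y -> Q y) -> is_tinf Q x.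
Proof.
move=> [h1 h2] hQ hP; split.
  by move=> y /hQ [->|/h1//]; case: x {h1 h2}.
by case: h2 => [->|/hP]; [left|right].
Qed.

Lemma tinf_tmin (J : Type) (f g : J -> trop R) x x' :
  is_tinf (fun y => exists j, y = f j) x -> is_tinf (fun y => exists j, y = g j) x' ->
  is_tinf (fun y => exists j, y = tmin (f j) (g j)) (tmin x x').
Proof.
move=> [h1 h2] [h1' h2'].
have lb : forall j, tle (tmin x x') (tmin (f j) (g j)).
  move=> j; apply: tmin_glb.
    exact: tle_trans (tmin_le_l _ _) (h1 _ (ex_intro _ j erefl)).
  exact: tle_trans (tmin_le_r _ _) (h1' _ (ex_intro _ j erefl)).
split; first by move=> y [j ->].
case: (tmin_cases x x') => e.
- case: h2 => [x0|[j xj]]; first by left; rewrite e.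
  right; exists j; apply: tle_anti; first exact: lb.
  rewrite e xj; exact: tmin_le_l.
- case: h2' => [x0|[j xj]]; first by left; rewrite e.
  right; exists j; apply: tle_anti; first exact: lb.
  rewrite e xj; exact: tmin_le_r.
Qed.

Lemma tinf_infs (I : Type) (P : I -> trop R -> Prop) (m : I -> trop R) M :
  (forall i, is_tinf (P i) (m i)) -> is_tinf (fun y => exists i, y = m i) M ->
  is_tinf (fun y => exists i, P i y) M.
Proof.
move=> hi [h1 h2]; split.
  move=> y [i Py]; apply: (tle_trans (h1 _ (ex_intro _ i erefl))).
  by case: (hi i) => + _; apply.
case: h2 => [->|[i ->]]; first by left.
by case: (hi i) => _ [->|Pm]; [left|right; exists i].
Qed.

Lemma tinf_tmul (P Q : trop R -> Prop) x x' :
  is_tinf P x -> is_tinf Q x' ->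
  is_tinf (fun y => exists p q, [/\ P p, Q q & y = tmul p q]) (tmul x x').
Proof.
move=> [h1 h2] [h1' h2']; split.
  by move=> y [p [q [Pp Qq ->]]]; apply: tmul_mono2; [apply: h1|apply: h1'].
case: h2 => [->|Px]; first by left.
case: h2' => [->|Qx]; first by left; rewrite tmulC.
by right; exists x, x'.
Qed.

End Trop.


Definition mcons k (j : nat) (u : mon nat k) : mon nat k.+1 :=
  [ffun i => if unlift ord0 i is Some i' then u i' else j].

Lemma mcons0 k j (u : mon nat k) : mcons j u ord0 = j.
Proof. by rewrite ffunE unlift_none. Qed.

Lemma mtail_mcons k j (u : mon nat k) : mtail (mcons j u) = u.
Proof. by apply/ffunP => i; rewrite !ffunE liftK. Qed.

Lemma mcons_eta k (w : mon nat k.+1) : mcons (w ord0) (mtail w) = w.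
Proof.
apply/ffunP => i; rewrite ffunE; case: unliftP => [j ->|->] //.
by rewrite ffunE.
Qed.

Lemma mdegE k (w : mon nat k.+1) : mdeg w = (w ord0 + mdeg (mtail w))%N.
Proof. by rewrite /mdeg big_ord_recl; congr addn; apply: eq_bigr => i _; rewrite ffunE. Qed.

Lemma mdeg_mcons k j (u : mon nat k) : mdeg (mcons j u) = (j + mdeg u)%N.
Proof. by rewrite mdegE mcons0 mtail_mcons. Qed.

Lemma mcons_inj k i j (u v : mon nat k) : mcons i u = mcons j v -> i = j /\ u = v.
Proof.
move=> e; split; first by rewrite -(mcons0 i u) e mcons0.
by rewrite -(mtail_mcons i u) e mtail_mcons.
Qed.

Lemma madd_mcons k i j (u v : mon nat k) :
  madd (mcons i u) (mcons j v) = mcons (i + j) (madd u v).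
Proof. by apply/ffunP => x; rewrite !ffunE; case: unlift => // y; rewrite ffunE. Qed.

Lemma mtail_madd k (u v : mon nat k.+1) : mtail (madd u v) = madd (mtail u) (mtail v).
Proof. by apply/ffunP => x; rewrite !ffunE. Qed.

Lemma madd0 k (u v : mon nat k.+1) : madd u v ord0 = (u ord0 + v ord0)%N.
Proof. by rewrite ffunE. Qed.

Lemma mdeg_madd k (u v : mon nat k) : mdeg (madd u v) = (mdeg u + mdeg v)%N.
Proof. by rewrite /mdeg -big_split; apply: eq_bigr => i _; rewrite ffunE. Qed.

Lemma mtail_deg_inj k (w w' : mon nat k.+1) :
  mtail w = mtail w' -> mdeg w = mdeg w' -> w = w'.
Proof.
move=> et; rewrite !mdegE et => /addIn e.
by rewrite -(mcons_eta w) -(mcons_eta w') e et.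
Qed.

Definition mzero (E : nmodType) n : mon E n := [ffun => 0].

Lemma madd_m0 (E : nmodType) n (u : mon E n) : madd u (mzero E n) = u.
Proof. by apply/ffunP => i; rewrite !ffunE addr0. Qed.

Lemma mtail_zero k : mtail (mzero nat k.+1) = mzero nat k.
Proof. by apply/ffunP => i; rewrite !ffunE. Qed.

Lemma mdeg_zero k : mdeg (mzero nat k) = 0%N.
Proof. by rewrite /mdeg big1 // => i _; rewrite ffunE. Qed.

Definition minit (E : nmodType) n (v : mon E n.+1) : mon E n :=
  [ffun i => v (lift ord_max i)].

Lemma mextend_max (E : nmodType) n (u : mon E n) k : mextend u k ord_max = k.
Proof. by rewrite ffunE unlift_none. Qed.

Lemma mextend_lift (E : nmodType) n (u : mon E n) k i : mextend u k (lift ord_max i) = u i.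
Proof. by rewrite ffunE liftK. Qed.

Lemma minit_mextend (E : nmodType) n (u : mon E n) k : minit (mextend u k) = u.
Proof. by apply/ffunP => i; rewrite ffunE mextend_lift. Qed.

Lemma mextend_eta (E : nmodType) n (v : mon E n.+1) : mextend (minit v) (v ord_max) = v.
Proof.
apply/ffunP => i; rewrite ffunE; case: unliftP => [j ->|->] //.
by rewrite ffunE.
Qed.

Lemma mextend_inj (E : nmodType) n (u v : mon E n) k l :
  mextend u k = mextend v l -> u = v /\ k = l.
Proof.
move=> e; split; first by rewrite -(minit_mextend u k) e minit_mextend.
by rewrite -(mextend_max u k) e mextend_max.
Qed.

Lemma mdeg_mextend n (u : mon nat n) k : mdeg (mextend u k) = (mdeg u + k)%N.
Proof.
rewrite /mdeg big_ord_recr mextend_max; congr addn; apply: eq_bigr => i _.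
have -> : widen_ord (leqnSn n) i = lift ord_max i by apply: val_inj; rewrite /= /bump leqNgt ltn_ord.
by rewrite mextend_lift.
Qed.


Lemma nat_above (x : rat) : exists N : nat, forall e : nat, (N <= e)%N -> x <= e%:R.
Proof.
exists (Num.Def.archi_bound `|x|) => e he.
have h1 := archi_boundP (normr_ge0 x).
have h2 : (Num.Def.archi_bound `|x|)%:R <= e%:R :> rat by rewrite ler_nat.
have h3 : x <= `|x| := ler_norm x.
lra.
Qed.

Lemma poly_grow (p : {poly rat}) : 0 < lead_coef p -> (1 < size p)%N ->
  forall B : rat, exists N : nat, forall e : nat, (N <= e)%N -> B <= p.[e%:R].
Proof.
elim/poly_ind: p => [|q c IH]; first by rewrite size_poly0.
move=> hl hs B.
have q0 : q != 0.
  apply/negP => /eqP q0; move: hs; rewrite q0 mul0r add0r size_polyC; by case: (c != 0).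
have sq : size (q * 'X + c%:P) = (size q).+1 by rewrite size_MXaddC (negbTE q0).
have lq : lead_coef (q * 'X + c%:P) = lead_coef q.
  rewrite lead_coefDl ?lead_coefMX // size_mulX // size_polyC.
  by case: (c != 0); rewrite ?ltnS ?lt0n ?size_poly_eq0.
rewrite lq in hl.
case: (leqP (size q) 1) => sq1.
  have qe := size1_polyC sq1.
  have l0 : lead_coef q = q`_0 by rewrite /lead_coef; move: sq1 (q0); rewrite -size_poly_eq0; case: (size q) => [|[|]].
  have [N hN] := nat_above (`|B - c| / q`_0).
  exists N => e /hN he; rewrite hornerMXaddC qe hornerC.
  rewrite l0 in hl.
  have : `|B - c| / q`_0 * q`_0 <= e%:R * q`_0 by rewrite ler_pM2r.
  rewrite divfK ?gt_eqF // => h.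
  have : B - c <= `|B - c| := ler_norm _.
  lra.
have [N hN] := IH hl sq1 `|B - c|.
exists (maxn N 1) => e; rewrite geq_max => /andP [/hN h1 h2].
rewrite hornerMXaddC.
have h3 : 1 <= e%:R :> rat by rewrite ler1n.
have : B - c <= `|B - c| := ler_norm _.
have : 0 <= `|B - c| := normr_ge0 _.
nra.
Qed.

Lemma poly_pos (p : {poly rat}) : 0 < lead_coef p ->
  exists N : nat, forall e : nat, (N <= e)%N -> 0 < p.[e%:R].
Proof.
move=> hl.
case: (leqP (size p) 1) => sp.
  exists 0%N => e _; rewrite (size1_polyC sp) hornerC.
  suff -> : p`_0 = lead_coef p by [].
  by rewrite /lead_coef; case: (size p) sp => [|[|]].
have [N hN] := poly_grow hl sp 1.
by exists N => e /hN; apply: lt_le_trans.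
Qed.

Lemma deg_ineq (P P' : {poly rat}) (e0 : nat) :
  (forall e : nat, (e0 <= e)%N ->
     0 <= P'.[e%:R] /\ (e%:R + 1) * P'.[e%:R] <= P.[(e + e)%:R]) ->
  P' != 0 -> (size P' < size P)%N.
Proof.
move=> H P0.
have lp : 0 < lead_coef P'.
  case: (ltrP 0 (lead_coef P')) => // hle.
  have : lead_coef P' != 0 by rewrite lead_coef_eq0.
  move=> ln0.
  have : 0 < lead_coef (- P') by rewrite lead_coefN oppr_gt0 lt_neqAle ln0 hle.
  move=> /poly_pos [N hN].
  have := hN (maxn N e0); rewrite leq_maxl => /(_ isT).
  have := H (maxn N e0); rewrite leq_maxr => /(_ isT) [h1 _].
  rewrite hornerN; lra.
rewrite ltnNge; apply/negP => hs.
pose Q := (('X + 1%:P) * P') - (P \Po ((2%:R : rat) *: 'X)).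
have sA : size (('X + 1%:P) * P') = (size P').+1.
  by rewrite size_mul ?size_XaddC // -size_poly_eq0 size_XaddC.
have sB : size (P \Po ((2%:R : rat) *: 'X)) = size P.
  by rewrite size_comp_poly2 // size_scale ?size_polyX // pnatr_eq0.
have lQ : lead_coef Q = lead_coef P'.
  rewrite /Q lead_coefDl; last by rewrite size_polyN sB sA ltnS.
  by rewrite lead_coefM lead_coefXaddC mul1r.
rewrite -lQ in lp.
have [N hN] := poly_pos lp.
have := hN (maxn N e0); rewrite leq_maxl => /(_ isT).
have := H (maxn N e0); rewrite leq_maxr => /(_ isT) [_ h2].
rewrite /Q hornerD hornerN hornerM horner_comp hornerD hornerX hornerC hornerZ hornerX.
rewrite natrD in h2. rewrite mulr_natl mulr2n.
lra.
Qed.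


Lemma fchoice (A B : Type) (Q : A -> B -> Prop) :
  (forall x, exists y, Q x y) -> exists f : A -> B, forall x, Q x (f x).
Proof.
move=> h; exists (fun x => proj1_sig (constructive_indefinite_description _ (h x))).
by move=> x; case: (constructive_indefinite_description _ (h x)).
Qed.

Section Core.
Variable R : realType.

Definition is_dehom k (F : tpolyfun R nat k.+1) (f : tpolyfun R nat k) : Prop :=
  forall u, is_tinf (fun y => exists j, y = F (mcons j u)) (f u).

Lemma dehom_ex k (F : tpolyfun R nat k.+1) : finsupp F -> exists f, is_dehom F f.
Proof.
move=> [s hs].
suff : forall u, exists x, is_tinf (fun y => exists j, y = F (mcons j u)) x by move/fchoice.
move=> u; apply: (@tinf_ex R _ (map F s)).
by move=> y [j ->] yN; apply: map_f; apply: hs.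
Qed.

Lemma dehom_finsupp k (F : tpolyfun R nat k.+1) f : finsupp F -> is_dehom F f -> finsupp f.
Proof.
move=> [s hs] hd; exists (map (@mtail k) s) => u fu.
have [j e] := tinf_wit (hd u) fu.
move: fu; rewrite e => /hs h; rewrite -(mtail_mcons j u); exact: map_f.
Qed.

Lemma dehom_nN k (F : tpolyfun R nat k.+1) f w : is_dehom F f -> F w <> None -> f (mtail w) <> None.
Proof. move=> hd Fw; apply: (tinf_nN (hd (mtail w)) (ex_intro _ (w ord0) erefl)); by rewrite mcons_eta. Qed.

Lemma dehom_supp k (F : tpolyfun R nat k.+1) f u : is_dehom F f -> f u <> None ->
  exists j, F (mcons j u) <> None.
Proof. by move=> hd fu; have [j e] := tinf_wit (hd u) fu; exists j; rewrite -e. Qed.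

Definition Jdh k (I : pset R nat k) : pset R nat k.+1 :=
  fun F => finsupp F /\ exists f, is_dehom F f /\ I f.

Lemma prod_finsupp (E : nmodType) k (g F H : tpolyfun R E k) :
  finsupp g -> finsupp F -> is_prod g F H -> finsupp H.
Proof.
move=> [sg hg] [sF hF] hp; exists [seq madd x y | x <- sg, y <- sF] => w Hw.
have [a [b [e ye]]] := tinf_wit (hp w) Hw.
have [ga Fb] : g a <> None /\ F b <> None by apply: tmul_None; rewrite -ye.
by rewrite -e; apply: allpairs_f; [apply: hg|apply: hF].
Qed.

Lemma Jdh_ideal k (I : pset R nat k) : is_ideal I -> is_ideal (Jdh I).
Proof.
move=> [h1 h2 h3 h4]; split.
- by move=> f [].
- split; first by exists [::].
  exists (@tinfty R nat k); split=> // u.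
  by apply: tinf_single; [move=> y [j ->]; left|left].
- move=> F G [[sF hF] [f [df If]]] [[sG hG] [g [dg Ig]]]; split.
    exists (sF ++ sG) => u; rewrite /tadd mem_cat.
    move=> h; apply/orP.
    have : F u <> None \/ G u <> None by move: h; case: (F u) => [x|]; case: (G u) => [y|] //= _; by [left|right].
    by case=> [/hF|/hG] ->; [left|right].
  exists (tadd f g); split; last exact: h3.
  by move=> u; apply: (tinf_tmin (df u) (dg u)).
- move=> g F H fg [fF [f [df If]]] hp; split; first exact: prod_finsupp fg fF hp.
  have [dg hdg] := dehom_ex fg.
  have [h hh] := dehom_ex (prod_finsupp fg fF hp).
  exists h; split=> //; apply: (h4 dg f h (dehom_finsupp fg hdg) If) => u.
  have lb : forall a b, madd a b = u -> tle (h u) (tmul (dg a) (f b)).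
    move=> a b eab.
    case: (classic (dg a = None)) => [->|da]; first by case: (h u).
    case: (classic (f b = None)) => [->|db]; first by rewrite tmulC; case: (h u).
    have [i ei] := tinf_wit (hdg a) da; have [i' ei'] := tinf_wit (df b) db.
    rewrite ei ei'.
    apply: (tle_trans (proj1 (hh u) _ (ex_intro _ (i + i')%N erefl))).
    apply: (proj1 (hp _)); exists (mcons i a), (mcons i' b); split=> //.
    by rewrite madd_mcons eab.
  split; first by move=> y [a [b [eab ->]]]; apply: lb.
  case: (classic (h u = None)) => [->|hu]; first by left.
  right; have [j ej] := tinf_wit (hh u) hu.
  have Hn : H (mcons j u) <> None by rewrite -ej.
  have [A [B [eAB eH]]] := tinf_wit (hp _) Hn.
  exists (mtail A), (mtail B); split; first by rewrite -mtail_madd eAB mtail_mcons.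
  apply: tle_anti; first by apply: lb; rewrite -mtail_madd eAB mtail_mcons.
  rewrite ej eH; apply: tmul_mono2.
    by apply: (proj1 (hdg _)); exists (A ord0); rewrite mcons_eta.
  by apply: (proj1 (df _)); exists (B ord0); rewrite mcons_eta.
Qed.

Lemma hom_in_Jdh k (I : pset R nat k) F : is_ideal I -> hom_ideal I F -> Jdh I F.
Proof.
move=> hI; apply; first exact: Jdh_ideal.
move=> fh [f [If [D [hD _ hfh]]]].
have fs := (match hI with And4 h _ _ _ => h end) f If.
split.
  case: fs => s hs; exists (map (fun u => mcons (D - mdeg u) u) s) => w.
  rewrite hfh; case: eqP => // ed fw.
  have -> : w = mcons (D - mdeg (mtail w)) (mtail w).
    by rewrite -{1}(mcons_eta w) -ed mdegE addnK.
  by apply: map_f; apply: hs.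
exists f; split=> // u; apply: tinf_single.
  move=> y [j ->]; rewrite hfh mtail_mcons; case: eqP => _; by [right|left].
case: (classic (f u = None)) => [->|fu]; first by left.
right; exists (D - mdeg u)%N; rewrite hfh mtail_mcons mdeg_mcons subnK ?eqxx //.
exact: hD.
Qed.

End Core.


Lemma madd_0m (E : nmodType) n (u : mon E n) : madd (mzero E n) u = u.
Proof. by apply/ffunP => i; rewrite !ffunE add0r. Qed.

Section Sub.
Variable R : realType.
Variable a : R.
Notation natR := (fun k : nat => (k%:R : R)).

Lemma subst_ex n (f : tpolyfun R nat n.+1) : finsupp f -> exists g, is_subst natR a f g.
Proof.
move=> [s hs].
suff : forall u, exists x, is_tinf (fun y => exists k, y = tmul (f (mextend u k)) (Some (k%:R * a))) x
  by move/fchoice.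
move=> u; apply: (@tinf_ex R _ [seq tmul (f w) (Some ((w ord_max)%:R * a)) | w <- s]).
move=> y [k ->] yN; have [fn _] := tmul_None yN.
rewrite -{2}(mextend_max u k).
exact: (map_f (fun w => tmul (f w) (Some ((w ord_max)%:R * a))) (hs _ fn)).
Qed.

Lemma subst_nN n (f : tpolyfun R nat n.+1) g u k :
  is_subst natR a f g -> f (mextend u k) <> None -> g u <> None.
Proof.
move=> hg fk; apply: (tinf_nN (hg u) (ex_intro _ k erefl)).
by case: (f (mextend u k)) fk.
Qed.

Lemma subst_supp n (f : tpolyfun R nat n.+1) g u :
  is_subst natR a f g -> g u <> None -> exists k, f (mextend u k) <> None.
Proof.
move=> hg gu; have [k ek] := tinf_wit (hg u) gu.
by exists k; have [] : f (mextend u k) <> None /\ Some (k%:R * a) <> None by apply: tmul_None; rewrite -ek.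
Qed.

Lemma subst_finsupp n (f : tpolyfun R nat n.+1) g :
  finsupp f -> is_subst natR a f g -> finsupp g.
Proof.
move=> [s hs] hg; exists (map (@minit nat n) s) => u gu.
have [k fk] := subst_supp hg gu.
by rewrite -(minit_mextend u k); apply: map_f; apply: hs.
Qed.

End Sub.

Definition noconst (R : realType) (E : nmodType) n (I : pset R E n) :=
  forall f, I f -> (forall u, f u <> None -> u = mzero E n) -> forall u, f u = None.

Lemma proper_noconst (R : realType) (E : nmodType) n (I : pset R E n) :
  is_ideal I -> tproper I -> noconst I.
Proof.
move=> [_ _ _ h4] [h [fh nIh]] f If hf u.
apply: NNPP => fu; apply: nIh.
have u0 := hf u fu; rewrite u0 in fu.
case ef: (f (mzero E n)) fu => [c|] // _.
pose h' := fun w => tmul (h w) (Some (- c)).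
apply: (h4 h' f h) => //.
  case: fh => s hs; exists s => w hw; apply: hs => hn; apply: hw; by rewrite /h' hn.
move=> w; apply: tinf_single.
  move=> y [x [b [exb ->]]].
  case: (classic (f b = None)) => [->|fb]; first by left; rewrite tmulC.
  right; have eb := hf b fb; rewrite eb madd_m0 in exb; rewrite eb exb ef /h'.
  by case: (h w) => //= r; rewrite subrK.
case: (classic (h w = None)) => [->|hw]; first by left.
right; exists w, (mzero E n); split; first exact: madd_m0.
by rewrite ef /h'; case: (h w) => //= r; rewrite subrK.
Qed.

Section Indep.
Variable R : realType.
Variable a : R.
Notation natR := (fun k : nat => (k%:R : R)).

Lemma indep_x0 k (I : pset R nat k) : is_ideal I -> noconst I ->
  forall e, indep (hom_ideal I) [:: mcons e (mzero nat k)].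
Proof.
move=> hI hnc e F HF [w0 Fw0] hsupp.
have [fF [f [df If]]] := hom_in_Jdh hI HF.
apply: (dehom_nN df Fw0); apply: (hnc f If) => u fu.
have [j Fj] := dehom_supp df fu.
by have := hsupp _ Fj; rewrite inE => /eqP /mcons_inj [_ ->].
Qed.

Definition tT n (K : nat) (s : mon nat n.+1) (j : nat) : mon nat n.+2 :=
  mcons (s ord0 + (K - j)) (mextend (mtail s) j).

Lemma indep_T n (I : pset R nat n.+1) (I' : pset R nat n) (e K : nat)
    (S : seq (mon nat n.+1)) :
  is_ideal I -> (forall f g, I f -> is_subst natR a f g -> I' g) ->
  (forall s, s \in S -> mdeg s = e) -> indep (hom_ideal I') S ->
  indep (hom_ideal I) [seq tT K s j | s <- S, j <- iota 0 K.+1].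
Proof.
move=> hI hsub hS hind F HF [w0 Fw0] hsupp.
have [fF [f [df If]]] := hom_in_Jdh hI HF.
have ff := dehom_finsupp fF df.
have [g hg] := subst_ex a ff.
have Ig := hsub f g If hg.
have gsupp : forall u, g u <> None -> exists s, s \in S /\ u = mtail s.
  move=> u gu; have [k fk] := subst_supp hg gu; have [j Fj] := dehom_supp df fk.
  have := hsupp _ Fj; case/allpairsP => [[s j'] [/= sS _ e1]].
  have [_ e2] := mcons_inj e1; have [e3 _] := mextend_inj e2.
  by exists s.
have gu0 : g (minit (mtail w0)) <> None.
  apply: (subst_nN (k := (mtail w0) ord_max) hg); rewrite mextend_eta.
  exact: dehom_nN df Fw0.
pose Pd := fun d => has (fun s => (g (mtail s) != None) && (mdeg (mtail s) == d)) S.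
have exP : exists d, Pd d.
  have [s0 [s0S e0]] := gsupp _ gu0; exists (mdeg (mtail s0)).
  apply/hasP; exists s0 => //; rewrite eqxx andbT -e0; exact/eqP.
have ubP : forall d, Pd d -> (d <= e)%N.
  move=> d /hasP [s sS /andP [_ /eqP <-]]; by rewrite -(hS s sS) (mdegE s) leq_addl.
case: (ex_maxnP exP ubP) => D PD maxD.
have Dle : (D <= e)%N := ubP D PD.
have gD : forall u, g u <> None -> (mdeg u <= D)%N.
  move=> u gu; have [s [sS es]] := gsupp u gu; rewrite es; apply: maxD.
  apply/hasP; exists s => //; rewrite eqxx andbT -es; exact/eqP.
have gD2 : exists u, g u <> None /\ mdeg u = D.
  by case/hasP: PD => s _ /andP [/eqP gs /eqP ds]; exists (mtail s).
pose gh := fun w : mon nat n.+1 => if mdeg w == D then g (mtail w) else None.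
pose G := fun w : mon nat n.+1 => if mdeg w == e then g (mtail w) else None.
pose m0 := mcons (e - D) (mzero nat n).
pose mono := fun w : mon nat n.+1 => if w == m0 then Some (0:R) else None.
have HG : hom_ideal I' G.
  move=> J hJ hgen; case: hJ => _ _ _ hJ4.
  apply: (hJ4 mono gh G).
  - by exists [:: m0] => w; rewrite /mono; case: eqP => // -> _; rewrite inE eqxx.
  - by apply: hgen; exists g; split=> //; exists D; split=> //; right.
  - move=> w; apply: tinf_single.
    + move=> y [a' [b [eab ->]]]; rewrite /mono; case: eqP => [ea|_]; last by left.
      rewrite tmulS0 /gh; case: eqP => [eb|_]; last by left.
      right; have dw : mdeg w = e.
        by rewrite -eab mdeg_madd ea eb mdeg_mcons mdeg_zero addn0 subnK.
      by rewrite /G dw eqxx -eab mtail_madd ea mtail_mcons madd_0m.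
    + rewrite /G; case: eqP => dw; last by left.
      case: (classic (g (mtail w) = None)) => [->|gw]; first by left.
      right; have dt := gD _ gw.
      have ew := mdegE w; rewrite dw in ew.
      exists m0, (mcons (w ord0 - (e - D)) (mtail w)); split.
        rewrite /m0 madd_mcons madd_0m.
        have -> : (e - D + (w ord0 - (e - D)) = w ord0)%N by lia.
        exact: mcons_eta.
      rewrite /mono eqxx tmulS0 /gh mdeg_mcons mtail_mcons.
      have -> : (w ord0 - (e - D) + mdeg (mtail w) = D)%N by lia.
      by rewrite eqxx.
have Gn : exists u, G u <> None.
  have [s0 [s0S e0]] := gsupp _ gu0.
  have le0 : (mdeg (mtail s0) <= e)%N by rewrite -(hS _ s0S) (mdegE s0) leq_addl.
  exists (mcons (e - mdeg (mtail s0)) (mtail s0)).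
  by rewrite /G mdeg_mcons subnK // eqxx mtail_mcons -e0.
apply: (hind G HG Gn) => w.
rewrite /G; case: eqP => // dw gw; have [s [sS es]] := gsupp _ gw.
have -> : w = s by apply: mtail_deg_inj => //; rewrite dw hS.
done.
Qed.

Lemma T_props n (e K : nat) (S : seq (mon nat n.+1)) :
  uniq S -> (forall s, s \in S -> mdeg s = e) ->
  let T := [seq tT K s j | s <- S, j <- iota 0 K.+1] in
  [/\ uniq T, size T = (size S * K.+1)%N & forall t, t \in T -> mdeg t = (e + K)%N].
Proof.
move=> uS hS T; split.
- apply: allpairs_uniq => //; first exact: iota_uniq.
  move=> p q hp hq.
  move: hp; case/allpairsP => [[x y] [xS yI ep]].
  move: hq; case/allpairsP => [[x' y'] [xS' yI' eq']].
  rewrite ep eq' /=.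
  rewrite /tT => /mcons_inj [e1 /mextend_inj [e2 e3]].
  move: yI yI'; rewrite !mem_iota /= !add0n !ltnS => hy hy'.
  subst y'.
  have e4 := addIn e1.
  by rewrite -(mcons_eta x) -(mcons_eta x') e4 e2.
- by rewrite size_allpairs size_iota.
- move=> t; case/allpairsP => [[s j] [sS jI ->]].
  move: jI; rewrite mem_iota /= add0n ltnS => hj.
  rewrite /tT mdeg_mcons mdeg_mextend -(hS s sS) (mdegE s); lia.
Qed.

End Indep.


Lemma main_abs (R : realType) (a : R) n (I : pset R nat n.+1) (I' : pset R nat n) (d d' : int) :
  is_ideal I -> noconst I ->
  (forall f g, I f -> is_subst (fun k : nat => (k%:R : R)) a f g -> I' g) ->
  dim_poly I d -> dim_poly I' d' -> d' <= d - 1.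
Proof.
move=> hI hnc hsub [P [[e0 hP] ->]] [P' [[e0' hP'] ->]].
case: (eqVneq P' 0) => [P0|P0].
  rewrite P0 size_poly0.
  have := hP e0 (leqnn _) => -[m [[_ hm] Pe]].
  have m1 : (1 <= m)%N.
    apply: (hm [:: mcons e0 (mzero nat n.+1)]) => //.
      by move=> u; rewrite inE => /eqP ->; rewrite mdeg_mcons mdeg_zero addn0.
    exact: indep_x0.
  have sP : (0 < size P)%N.
    rewrite lt0n size_poly_eq0; apply/negP => /eqP P00.
    by move: Pe; rewrite P00 horner0 => /esym/eqP; rewrite pnatr_eq0 => /eqP m0; rewrite m0 in m1.
  lia.
have key : forall e : nat, (maxn e0 e0' <= e)%N ->
    0 <= P'.[e%:R] /\ (e%:R + 1) * P'.[e%:R] <= P.[(e + e)%:R].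
  move=> e; rewrite geq_max => /andP [h1 h2].
  have [m' [[[S [uS sS dS iS]] _] P'e]] := hP' e h2.
  have [m [[_ hm] Pe]] := hP (e + e)%N (leq_trans h1 (leq_addr _ _)).
  have [uT sT dT] := T_props e uS dS.
  have iT := indep_T hI hsub dS iS (K := e).
  have := hm _ uT dT iT; rewrite sT sS => hle.
  rewrite P'e Pe; split; first exact: ler0n.
  have -> : (e%:R + 1) * (m'%:R : rat) = (m' * e.+1)%:R by rewrite natrM -natr1 mulrC.
  by rewrite ler_nat.
have := deg_ineq key P0.
lia.
Qed.


Definition toZ n (v : mon nat n) : mon int n := [ffun i => (v i)%:Z].
Definition toN n (u : mon int n) : mon nat n := [ffun i => `|u i|%N].
Definition posm n (u : mon int n) : bool := [forall i, 0 <= u i].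

Lemma posm_toZ n (v : mon nat n) : posm (toZ v).
Proof. by apply/forallP => i; rewrite ffunE. Qed.

Lemma toN_toZ n (v : mon nat n) : toN (toZ v) = v.
Proof. by apply/ffunP => i; rewrite !ffunE. Qed.

Lemma toZ_toN n (u : mon int n) : posm u -> toZ (toN u) = u.
Proof. by move/forallP => h; apply/ffunP => i; rewrite !ffunE gez0_abs. Qed.

Lemma toZ_inj n : injective (@toZ n).
Proof. by move=> x y e; rewrite -(toN_toZ x) e toN_toZ. Qed.

Lemma toZ_madd n (a b : mon nat n) : toZ (madd a b) = madd (toZ a) (toZ b).
Proof. by apply/ffunP => i; rewrite !ffunE. Qed.

Lemma toZ_mextend n (v : mon nat n) (k : nat) : toZ (mextend v k) = mextend (toZ v) k%:Z.
Proof. by apply/ffunP => i; rewrite !ffunE; case: unlift => // j; rewrite ffunE. Qed.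

Lemma toZ_zero n : toZ (mzero nat n) = mzero int n.
Proof. by apply/ffunP => i; rewrite !ffunE. Qed.

Lemma posm_madd n (a b : mon int n) : posm a -> posm b -> posm (madd a b).
Proof.
move=> /forallP ha /forallP hb; apply/forallP => i; rewrite ffunE.
exact: addr_ge0.
Qed.

Lemma posm_mextend n (u : mon int n) k : posm (mextend u k) -> posm u /\ 0 <= k.
Proof.
move/forallP => h; split; last by have := h ord_max; rewrite mextend_max.
by apply/forallP => i; have := h (lift ord_max i); rewrite mextend_lift.
Qed.

Section Lau.
Variable R : realType.

Lemma lau_toZ n (f : tpolyfun R nat n) v : laurent_of f (toZ v) = f v.
Proof. by rewrite /laurent_of; have := posm_toZ v; rewrite /posm => ->; congr f; apply/ffunP => i; rewrite !ffunE. Qed.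

Lemma lau_npos n (f : tpolyfun R nat n) u : ~~ posm u -> laurent_of f u = None.
Proof. by rewrite /laurent_of /posm => /negbTE ->. Qed.

Lemma lau_cases n (u : mon int n) : (exists v, u = toZ v) \/ ~~ posm u.
Proof. case: (boolP (posm u)) => pu; last by right. by left; exists (toN u); rewrite toZ_toN. Qed.

Lemma lau_finsupp n (f : tpolyfun R nat n) : finsupp f -> finsupp (laurent_of f).
Proof.
move=> [s hs]; exists (map (@toZ n) s) => u.
case: (lau_cases u) => [[v ->]|pu]; last by rewrite lau_npos.
by rewrite lau_toZ => /hs h; apply: map_f.
Qed.

Lemma tadd_finsupp (E : nmodType) n (f g : tpolyfun R E n) :
  finsupp f -> finsupp g -> finsupp (tadd f g).
Proof.
move=> [sF hF] [sG hG]; exists (sF ++ sG) => u; rewrite /tadd mem_cat.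
move=> h; apply/orP.
have : f u <> None \/ g u <> None by move: h; case: (f u) => [x|]; case: (g u) => [y|] //= _; by [left|right].
by case=> [/hF|/hG] ->; [left|right].
Qed.

Lemma I0_ideal n (I : pset R int n) : is_ideal I ->
  is_ideal (fun f : tpolyfun R nat n => finsupp f /\ I (laurent_of f)).
Proof.
move=> [h1 h2 h3 h4]; split.
- by move=> f [].
- split; first by exists [::].
  have -> : laurent_of (@tinfty R nat n) = @tinfty R int n.
    by apply: functional_extensionality => u; rewrite /laurent_of; case: ifP.
  exact: h2.
- move=> f g [ff If] [fg Ig]; split; first exact: tadd_finsupp.
  have -> : laurent_of (tadd f g) = tadd (laurent_of f) (laurent_of g).
    by apply: functional_extensionality => u; rewrite /laurent_of /tadd; case: ifP.
  exact: h3.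
- move=> g f h fg [ff If] hp; split; first exact: prod_finsupp fg ff hp.
  apply: (h4 (laurent_of g) (laurent_of f) _ (lau_finsupp fg) If) => w.
  case: (lau_cases w) => [[v ->]|pw].
  + rewrite lau_toZ; apply: (tinf_ext (hp v)).
    * move=> y [a' [b [eab ->]]].
      case: (lau_cases a') => [[A eA]|pa]; last by left; rewrite lau_npos.
      case: (lau_cases b) => [[B eB]|pb]; last by left; rewrite (lau_npos f pb) tmulC.
      subst a' b; right; exists A, B; split; last by rewrite !lau_toZ.
      by apply: toZ_inj; rewrite toZ_madd eab.
    * move=> y [A [B [e ->]]]; exists (toZ A), (toZ B); split; last by rewrite !lau_toZ.
      by rewrite -toZ_madd e.
  + rewrite lau_npos //; apply: tinf_single; last by left.
    move=> y [a' [b [eab ->]]]; left.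
    case: (lau_cases a') => [[A eA]|pa]; last by rewrite lau_npos.
    case: (lau_cases b) => [[B eB]|pb]; last by rewrite (lau_npos f pb) tmulC.
    exfalso; move: pw; rewrite -eab eA eB -toZ_madd posm_toZ.
    done.
Qed.

Lemma I0_noconst n (I : pset R int n) : is_ideal I -> tproper I ->
  noconst (fun f : tpolyfun R nat n => finsupp f /\ I (laurent_of f)).
Proof.
move=> hI hp f [ff If] hf u.
rewrite -(lau_toZ f u); apply: (proper_noconst hI hp If) => u'.
case: (lau_cases u') => [[v ->]|pu]; last by rewrite lau_npos.
by rewrite lau_toZ => /hf ->; rewrite toZ_zero.
Qed.

Lemma I0_sub n (a : R) (I : pset R int n.+1) f g :
  (finsupp f /\ I (laurent_of f)) -> is_subst (fun k : nat => (k%:R : R)) a f g ->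
  finsupp g /\ subst_set (fun k : int => (k%:~R : R)) a I (laurent_of g).
Proof.
move=> [ff If] hg; split; first exact: subst_finsupp ff hg.
exists (laurent_of f); split=> // u.
case: (lau_cases u) => [[v ->]|pu].
- rewrite lau_toZ; apply: (tinf_ext (hg v)).
  + move=> y [k ->].
    case: (lau_cases (mextend (toZ v) k)) => [[w ew]|pm]; last by left; rewrite lau_npos.
    have := @posm_mextend _ (toZ v) k; rewrite ew posm_toZ => /(_ isT).
    case: k ew => [k|k] ew [_ k0] //.
    right; exists k; rewrite (_ : w = mextend v k); last by apply: toZ_inj; rewrite toZ_mextend ew.
    by rewrite lau_toZ.
  + move=> y [k ->]; exists (Posz k); by rewrite -toZ_mextend lau_toZ.
- rewrite lau_npos //; apply: tinf_single; last by left.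
  move=> y [k ->]; left; rewrite lau_npos //.
  by apply: contra pu => /posm_mextend [].
Qed.

End Lau.

End Aux.
Import Aux.

(* Variables x_1..x_{n+1} (paper's n is our n.+1); x_{n+1} is substituted. *)
Theorem proposition4p1 (R : realType) (n : nat) (a : R) :
  (forall I : pset R nat n.+1, tropical_ideal I -> tproper I ->
     forall d d' : int, dim_poly I d ->
       dim_poly (subst_set (fun k : nat => k%:R) a I) d' -> d' <= d - 1)
  /\
  (forall I : pset R int n.+1, tropical_ideal I -> tproper I ->
     forall d d' : int, dim_laurent I d ->
       dim_laurent (subst_set (fun k : int => k%:~R) a I) d' -> d' <= d - 1).
Proof.
split.
- move=> I [hI _] hp d d' hd hd'.
  apply: (@main_abs R a n I (subst_set (fun k : nat => k%:R) a I) d d' hI (proper_noconst hI hp) _ hd hd').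
  by move=> f g If hg; exists f.
- move=> I [hI _] hp d d' hd hd'.
  apply: (@main_abs R a n _ _ d d' (I0_ideal hI) (I0_noconst hI hp) _ hd hd').
  by move=> f g hf hg; exact: (I0_sub hf hg).
Qed.
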